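(* Let $\mathsf k$ be a field, $t>2$, and $Y$ a $t$-connected ladder with lower outside corners $S_w=(a_{w-1},b_w)$, $w=1,\dots,h+1$, and let $\mathfrak X=X_{S_1}\cdots X_{S_{h+1}}$. Let $\psi,\chi\colon\mathsf k[Y]_{\mathfrak X}\to\mathsf k[Y]_{\mathfrak X}$ be the $\mathsf k$-algebra homomorphisms defined on variables $X_{ij}\in Y$ by $$\psi(X_{ij})=X_{ij}+\sum_{\substack{r\ge1\\ u_1<\cdots<u_r\in U(i,j)}}\frac{X_{a_{u_1-1},j}X_{a_{u_2-1},b_{u_1}}\cdots X_{a_{u_r-1},b_{u_{r-1}}}X_{i,b_{u_r}}}{X_{S_{u_1}}X_{S_{u_2}}\cdots X_{S_{u_r}}},$$ $$\chi(X_{ij})=X_{ij}+\sum_{\substack{r\ge1\\ u_1<\cdots<u_r\in U(i,j)}}(-1)^r\frac{X_{a_{u_1-1},j}X_{a_{u_2-1},b_{u_1}}\cdots X_{a_{u_r-1},b_{u_{r-1}}}X_{i,b_{u_r}}}{X_{S_{u_1}}X_{S_{u_2}}\cdots X_{S_{u_r}}},$$ where $U(i,j)=\{w\in\mathbb N\mid i>a_{w-1}\text{ and }j>b_w\}$. Then $\psi$ and $\chi$ are mutually inverse automorphisms of $\mathsf k[Y]_{\mathfrak X}$.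
   Context: Let $X=(X_{ij})$ be an $m\times n$ matrix of indeterminates; identify $X_{pq}$ with $(p,q)$. A ladder is a subset $Y$ of the entries of $X$ such that whenever $X_{ij},X_{pq}\in Y$ with $i\le p$, $j\le q$, also $X_{iq},X_{pj}\in Y$; $X$ is the smallest matrix containing $Y$ and every row and column of $X$ meets $Y$. A subladder is a subset of $Y$ that is itself a ladder. A $t$-minor of $Y$ is a $t\times t$ minor of $X$ with all entries in $Y$. $Y$ is $t$-disconnected if there are nonempty subladders $Y',Y''$ with $Y=Y'\sqcup Y''$ and every $t$-minor of $Y$ in $Y'$ or $Y''$; otherwise $t$-connected. A lower outside corner of $Y$ is a point $(p,q)\in Y$ with $(p-1,q)\notin Y$ and $(p,q-1)\notin Y$; these are listed as $S_1,\dots,S_{h+1}$ in order of increasing row index (so decreasing column index) and written $S_w=(a_{w-1},b_w)$; $X_{S_w}$ is the variable at $S_w$. $\mathsf k[Y]$ is the polynomial ring in the variables of $Y$; all variables appearing in the formulas for $\psi,\chi$ lie in $Y$, and $\psi(X_{S_w})=\chi(X_{S_w})=X_{S_w}$ since $U(S_w)=\varnothing$. *)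

(* Defs.v *)
From HB Require Import structures.
From mathcomp Require Import all_boot all_order all_algebra.
Set Implicit Arguments. Unset Strict Implicit. Unset Printing Implicit Defensive.
Import Order.TTheory GRing.Theory Num.Theory.
Local Open Scope ring_scope.

(* Entries of the m x n matrix X are pairs (p,q) : 'I_m * 'I_n (0-based). *)

Definition ladder_closed (m n : nat) (Y : {set 'I_m * 'I_n}) : Prop :=
  forall (i p : 'I_m) (j q : 'I_n),
    (i, j) \in Y -> (p, q) \in Y -> (i <= p)%N -> (j <= q)%N ->
    (i, q) \in Y /\ (p, j) \in Y.

(* Y is a ladder whose ambient matrix is X (every row/column of X meets Y) *)
Definition is_ladder (m n : nat) (Y : {set 'I_m * 'I_n}) : Prop :=
  ladder_closed Y /\
  (forall i : 'I_m, exists j : 'I_n, (i, j) \in Y) /\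
  (forall j : 'I_n, exists i : 'I_m, (i, j) \in Y).

(* a t-minor of Y: rows R, columns C, |R| = |C| = t, all entries in Y;
   "the minor lies in Z" means all its entries lie in Z *)
Definition is_tminor (m n t : nat) (Y : {set 'I_m * 'I_n})
  (R : {set 'I_m}) (C : {set 'I_n}) : Prop :=
  #|R| = t /\ #|C| = t /\ setX R C \subset Y.

Definition t_disconnected (m n t : nat) (Y : {set 'I_m * 'I_n}) : Prop :=
  exists Y1 Y2 : {set 'I_m * 'I_n},
    Y1 != set0 /\ Y2 != set0 /\ ladder_closed Y1 /\ ladder_closed Y2 /\
    Y1 :&: Y2 = set0 /\ Y1 :|: Y2 = Y /\
    (forall R C, is_tminor t Y R C ->
       setX R C \subset Y1 \/ setX R C \subset Y2).

Definition t_connected (m n t : nat) (Y : {set 'I_m * 'I_n}) : Prop :=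
  ~ t_disconnected t Y.

(* lower outside corner: (p,q) in Y, (p-1,q) not in Y, (p,q-1) not in Y
   (a nonexistent position counts as not in Y) *)
Definition lower_outside_corner (m n : nat) (Y : {set 'I_m * 'I_n})
  (s : 'I_m * 'I_n) : bool :=
  [&& s \in Y,
      ~~ [exists p : 'I_m, ((val p).+1 == val s.1) && ((p, s.2) \in Y)] &
      ~~ [exists q : 'I_n, ((val q).+1 == val s.2) && ((s.1, q) \in Y)]].

(* c : 'I_(h+1) -> corners, with c k = S_{k+1} = (a_k, b_{k+1}) of the paper *)
Definition corners_listing (m n h : nat) (Y : {set 'I_m * 'I_n})
  (c : 'I_h.+1 -> 'I_m * 'I_n) : Prop :=
  (forall k l : 'I_h.+1, (k < l)%N -> (val (c k).1 < val (c l).1)%N) /\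
  (forall s, lower_outside_corner Y s = (s \in [set c k | k : 'I_h.+1])).

(* U(i,j), 0-based: { k | i > a_k and j > b_{k+1} } *)
Definition Uset (m n h : nat) (c : 'I_h.+1 -> 'I_m * 'I_n)
  (i : 'I_m) (j : 'I_n) : {set 'I_h.+1} :=
  [set k | (val (c k).1 < val i)%N && (val (c k).2 < val j)%N].

(* For u_1 < ... < u_r (the sorted list s):
   numerator   X_{a_{u1-1},j} X_{a_{u2-1},b_{u1}} ... X_{a_{ur-1},b_{u_{r-1}}} X_{i,b_{ur}}
   denominator X_{S_{u1}} ... X_{S_{ur}} *)
Definition chain_num (A : comUnitRingType) (m n h : nat)
  (c : 'I_h.+1 -> 'I_m * 'I_n) (x : 'I_m -> 'I_n -> A)
  (i : 'I_m) (j : 'I_n) (s : seq 'I_h.+1) : A :=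
  \prod_(p <- zip (rcons [seq (c k).1 | k <- s] i) (j :: [seq (c k).2 | k <- s]))
     x p.1 p.2.

Definition chain_den (A : comUnitRingType) (m n h : nat)
  (c : 'I_h.+1 -> 'I_m * 'I_n) (x : 'I_m -> 'I_n -> A) (s : seq 'I_h.+1) : A :=
  \prod_(k <- s) x (c k).1 (c k).2.

(* generic substitution: e = 1 gives psi, e = -1 gives chi.
   The subsets K of U(i,j) are enumerated in increasing order by enum K. *)
Definition subst_map (A : comUnitRingType) (e : A) (m n h : nat)
  (c : 'I_h.+1 -> 'I_m * 'I_n) (x : 'I_m -> 'I_n -> A) : 'I_m -> 'I_n -> A :=
  fun i j => x i j +
    \sum_(K : {set 'I_h.+1} | (K != set0) && (K \subset Uset c i j))
       e ^+ #|K| * (chain_num c x i j (enum K) / chain_den c x (enum K)).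

Definition psi_map (A : comUnitRingType) (m n h : nat)
  (c : 'I_h.+1 -> 'I_m * 'I_n) (x : 'I_m -> 'I_n -> A) := subst_map 1 c x.
Definition chi_map (A : comUnitRingType) (m n h : nat)
  (c : 'I_h.+1 -> 'I_m * 'I_n) (x : 'I_m -> 'I_n -> A) := subst_map (-1) c x.

(* Main.v *)
Require Import Defs.
From HB Require Import structures.
From mathcomp Require Import all_boot all_order all_algebra ring zify.
Import GRing.Theory.
Set Implicit Arguments. Unset Strict Implicit. Unset Printing Implicit Defensive.
Local Open Scope ring_scope.

Definition ltO (N : nat) : rel 'I_N := fun a b => (val a < val b)%N.

Lemma ltO_trans N : transitive (@ltO N).
Proof. move=> a b d; exact: ltn_trans. Qed.
Lemma ltO_irr N : irreflexive (@ltO N).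
Proof. move=> a; exact: ltnn. Qed.

Lemma sorted_enum_set N (K : {set 'I_N}) : sorted (@ltO N) (enum K).
Proof.
rewrite -deprecated_filter_index_enum.
apply: (subseq_sorted (@ltO_trans N) (filter_subseq _ _)).
rewrite /index_enum; case: index_enum_key => /=; rewrite -enumT.
have := iota_ltn_sorted 0 N; rewrite -val_enum_ord sorted_map.
by [].
Qed.

Lemma enum_U1_last N (K : {set 'I_N}) (u : 'I_N) :
  K \subset [set k | (val k < val u)%N] -> enum (u |: K) = rcons (enum K) u.
Proof.
move=> /subsetP sK.
apply: (irr_sorted_eq (@ltO_trans N) (@ltO_irr N)).
- exact: sorted_enum_set.
- have tr : transitive (fun y x : 'I_N => @ltO N x y).
    by move=> ? ? ? h1 h2; exact: ltO_trans h2 h1.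
  rewrite -rev_sorted rev_rcons /= (path_sortedE tr).
  rewrite rev_sorted sorted_enum_set andbT.
  by apply/allP => a; rewrite mem_rev mem_enum => /sK; rewrite inE.
- move=> a; by rewrite mem_enum mem_rcons !inE mem_enum.
Qed.

Lemma enum_U1_first N (K : {set 'I_N}) (u : 'I_N) :
  K \subset [set k | (val u < val k)%N] -> enum (u |: K) = u :: enum K.
Proof.
move=> /subsetP sK.
apply: (irr_sorted_eq (@ltO_trans N) (@ltO_irr N)).
- exact: sorted_enum_set.
- rewrite /= (path_sortedE (@ltO_trans N)) sorted_enum_set andbT.
  by apply/allP => a; rewrite mem_enum => /sK; rewrite inE.
- move=> a; by rewrite mem_enum !inE mem_enum.
Qed.
Definition ltb N (b : bool) (k u : 'I_N) : bool :=
  if b then (val k < val u)%N else (val u < val k)%N.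

Lemma ltb_irr N b (u : 'I_N) : ltb b u u = false.
Proof. by case: b; rewrite /ltb ltnn. Qed.

Lemma ltb_asym N b (u v : 'I_N) : ltb b u v -> ltb b v u -> False.
Proof. by case: b; rewrite /ltb => h1 h2; have := ltn_trans h1 h2; rewrite ltnn. Qed.

Lemma ext_exists N b (K : {set 'I_N}) : K != set0 ->
  exists2 u, u \in K & forall k, k \in K -> (k == u) || ltb b k u.
Proof.
case/set0Pn => k0 k0K.
case: b.
- case: (arg_maxnP (fun i : 'I_N => val i) k0K) => u uK H.
  exists u => // k kK; rewrite /ltb.
  have : (val k <= val u)%N := H k kK.
  rewrite leq_eqVlt => /orP [/eqP e|->]; last by rewrite orbT.
  by rewrite (val_inj e) eqxx.
- case: (arg_minnP (fun i : 'I_N => val i) k0K) => u uK H.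
  exists u => // k kK; rewrite /ltb.
  have : (val u <= val k)%N := H k kK.
  rewrite leq_eqVlt => /orP [/eqP e|->]; last by rewrite orbT.
  by rewrite (val_inj e) eqxx.
Qed.

Lemma split_ext (V : nmodType) N (b : bool) (U : {set 'I_N}) (f : {set 'I_N} -> V) :
  \sum_(K : {set 'I_N} | (K != set0) && (K \subset U)) f K =
  \sum_(u in U) \sum_(K : {set 'I_N} | K \subset U :&: [set k | ltb b k u]) f (u |: K).
Proof.
pose P (u : 'I_N) (K : {set 'I_N}) : bool := [&& u \in K, K \subset U & K \subset [set k | (k == u) || ltb b k u]].
transitivity (\sum_(K : {set 'I_N} | (K != set0) && (K \subset U)) \sum_(u | P u K) f K).
  apply: eq_bigr => K /andP [K0 KU].
  have [u0 u0K Hu0] := ext_exists b K0.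
  rewrite (big_pred1 u0) // => u; rewrite /P /=.
  apply/idP/idP.
  - case/and3P => uK _ /subsetP sK.
    have := sK u0 u0K; rewrite inE => /orP [/eqP -> //|h1].
    have := Hu0 u uK => /orP [//|h2].
    by case: (ltb_asym h1 h2).
  - move/eqP => ->; rewrite u0K KU /=.
    by apply/subsetP => k kK; rewrite inE Hu0.
rewrite (exchange_big_dep (fun u => u \in U)) /=; last first.
  by move=> K u _ /and3P [uK /subsetP KU _]; apply: KU.
apply: eq_bigr => u uU.
rewrite (reindex_onto (fun K => u |: K) (fun K => K :\ u)) /=; last first.
  by move=> K /andP [_ /and3P [uK _ _]]; rewrite setD1K.
apply: eq_bigl => K; rewrite /P.
apply/idP/idP.
- case/andP => /and4P [_ _ /subsetP sU /subsetP sL] /eqP eK.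
  apply/subsetP => k kK.
  have kn : k != u by move: kK; rewrite -eK !inE => /andP [].
  have kU : k \in u |: K by rewrite !inE kK orbT.
  rewrite !inE sU //=.
  by have := sL k kU; rewrite inE (negbTE kn).
- move/subsetP => sK.
  have uK : u \notin K by apply/negP => /sK; rewrite !inE ltb_irr andbF.
  rewrite setU1K // eqxx andbT.
  have uin : u \in u |: K by rewrite !inE eqxx.
  have n0 : u |: K != set0 by apply/set0Pn; exists u.
  have s1 : u |: K \subset U.
    by apply/subsetP => k; rewrite !inE => /orP [/eqP -> //|/sK]; rewrite !inE => /andP [].
  have s2 : u |: K \subset [set k | (k == u) || ltb b k u].
    apply/subsetP => k; rewrite !inE => /orP [-> //|/sK]; rewrite !inE => /andP [_ ->].
    by rewrite orbT.
  by rewrite n0 s1 uin s2.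
Qed.

Section Chains.
Variables (A : comUnitRingType) (m n h : nat) (c : 'I_h.+1 -> 'I_m * 'I_n).
Implicit Types (y : 'I_m -> 'I_n -> A) (e : A).

Definition term e y i j (K : {set 'I_h.+1}) : A :=
  e ^+ #|K| * (chain_num c y i j (enum K) / chain_den c y (enum K)).

Lemma subst_mapE e y i j : subst_map e c y i j =
  y i j + \sum_(K : {set 'I_h.+1} | (K != set0) && (K \subset Uset c i j)) term e y i j K.
Proof. by []. Qed.

Lemma term0 e y i j : term e y i j set0 = y i j.
Proof.
by rewrite /term cards0 expr0 mul1r enum_set0 /chain_num /chain_den /= big_seq1 big_nil invr1 mulr1.
Qed.

Lemma subst_full e y i j : subst_map e c y i j =
  \sum_(K : {set 'I_h.+1} | K \subset Uset c i j) term e y i j K.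
Proof.
rewrite (bigD1 set0) ?sub0set //= term0 subst_mapE; congr (_ + _).
by apply: eq_bigl => K; rewrite andbC.
Qed.

Lemma chain_num_cons y i j u s :
  chain_num c y i j (u :: s) = y (c u).1 j * chain_num c y i (c u).2 s.
Proof. by rewrite /chain_num /= big_cons. Qed.

Lemma chain_den_cons y u s :
  chain_den c y (u :: s) = y (c u).1 (c u).2 * chain_den c y s.
Proof. by rewrite /chain_den big_cons. Qed.

Lemma chain_num_rcons y i j u s :
  chain_num c y i j (rcons s u) = chain_num c y (c u).1 j s * y i (c u).2.
Proof.
rewrite /chain_num !map_rcons -rcons_cons zip_rcons; last by rewrite size_rcons /= !size_map.
by rewrite -cats1 big_cat big_seq1.
Qed.

Lemma chain_den_rcons y u s :
  chain_den c y (rcons s u) = chain_den c y s * y (c u).1 (c u).2.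
Proof. by rewrite /chain_den -cats1 big_cat big_seq1. Qed.

Lemma chain_den_unit y s : (forall k, y (c k).1 (c k).2 \is a GRing.unit) ->
  chain_den c y s \is a GRing.unit.
Proof.
move=> Hu; elim: s => [|u s IH]; first by rewrite /chain_den big_nil unitr1.
by rewrite chain_den_cons unitrM Hu IH.
Qed.

Lemma term_last e y i j (u : 'I_h.+1) (K : {set 'I_h.+1}) : (forall k, y (c k).1 (c k).2 \is a GRing.unit) ->
  K \subset [set k | (val k < val u)%N] ->
  term e y i j (u |: K) = e * (term e y (c u).1 j K * (y i (c u).2 / y (c u).1 (c u).2)).
Proof.
move=> Hu sK.
have uK : u \notin K by apply/negP => /(subsetP sK); rewrite inE ltnn.
rewrite /term enum_U1_last // cardsU1 uK chain_num_rcons chain_den_rcons.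
rewrite invrM ?chain_den_unit ?Hu // add1n exprS.
ring.
Qed.

Lemma term_first e y i j (u : 'I_h.+1) (K : {set 'I_h.+1}) : (forall k, y (c k).1 (c k).2 \is a GRing.unit) ->
  K \subset [set k | (val u < val k)%N] ->
  term e y i j (u |: K) = e * (y (c u).1 j / y (c u).1 (c u).2 * term e y i (c u).2 K).
Proof.
move=> Hu sK.
have uK : u \notin K by apply/negP => /(subsetP sK); rewrite inE ltnn.
rewrite /term enum_U1_first // cardsU1 uK chain_num_cons chain_den_cons.
rewrite invrM ?chain_den_unit ?Hu // add1n exprS.
ring.
Qed.

End Chains.

Section Rec.
Variables (A : comUnitRingType) (m n h : nat) (c : 'I_h.+1 -> 'I_m * 'I_n).
Hypothesis G1 : forall k l : 'I_h.+1, (k < l)%N -> ((c k).1 < (c l).1)%N.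
Hypothesis G2 : forall k l : 'I_h.+1, (k < l)%N -> ((c l).2 < (c k).2)%N.
Implicit Types (y : 'I_m -> 'I_n -> A) (e : A).

Lemma U_last i j u : u \in Uset c i j ->
  Uset c i j :&: [set k | ltb true k u] = Uset c (c u).1 j.
Proof.
rewrite inE => /andP [ui uj].
apply/setP => k; rewrite !inE /ltb.
case: (ltnP k u) => ku.
- have := G1 ku => lt1.
  by rewrite (ltn_trans lt1 ui) lt1 andbT.
- rewrite andbF; symmetry; apply/negbTE; rewrite negb_and -leqNgt.
  move: ku; rewrite leq_eqVlt => /orP [/eqP e|lt].
  + by rewrite (val_inj e) leqnn.
  + by rewrite ltnW ?G1.
Qed.

Lemma U_first i j u : u \in Uset c i j ->
  Uset c i j :&: [set k | ltb false k u] = Uset c i (c u).2.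
Proof.
rewrite inE => /andP [ui uj].
apply/setP => k; rewrite !inE /ltb.
case: (ltnP u k) => ku.
- have := G2 ku => lt1.
  by rewrite (ltn_trans lt1 uj) lt1 andbT.
- rewrite andbF; symmetry; apply/negbTE; rewrite negb_and -!leqNgt.
  move: ku; rewrite leq_eqVlt => /orP [/eqP e|lt].
  + by rewrite (val_inj e) leqnn orbT.
  + by rewrite (ltnW (G2 lt)) orbT.
Qed.

Lemma U_corner w : Uset c (c w).1 (c w).2 = set0.
Proof.
apply/setP => k; rewrite !inE.
case: (ltngtP k w) => kw.
- by have := G2 kw => /ltnW; rewrite leqNgt => /negbTE ->; rewrite andbF.
- by have := G1 kw => /ltnW; rewrite leqNgt => /negbTE ->.
- by rewrite (val_inj kw) ltnn.
Qed.

Lemma subst_corner e y w : subst_map e c y (c w).1 (c w).2 = y (c w).1 (c w).2.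
Proof.
rewrite subst_mapE U_corner big_pred0 ?addr0 // => K.
by rewrite subset0; case: eqP.
Qed.

Lemma rec_last e y i j : (forall k, y (c k).1 (c k).2 \is a GRing.unit) ->
  subst_map e c y i j = y i j + \sum_(u in Uset c i j)
     e * (subst_map e c y (c u).1 j * (y i (c u).2 / y (c u).1 (c u).2)).
Proof.
move=> Hu.
rewrite subst_mapE (split_ext true); congr (_ + _); apply: eq_bigr => u uU.
rewrite (subst_full c e y) -(U_last uU) mulr_suml mulr_sumr; apply: eq_bigr => K sK.
rewrite term_last //; apply: subset_trans sK (subsetIr _ _).
Qed.

Lemma rec_first e y i j : (forall k, y (c k).1 (c k).2 \is a GRing.unit) ->
  subst_map e c y i j = y i j + \sum_(u in Uset c i j)
     e * (y (c u).1 j / y (c u).1 (c u).2 * subst_map e c y i (c u).2).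
Proof.
move=> Hu.
rewrite subst_mapE (split_ext false); congr (_ + _); apply: eq_bigr => u uU.
rewrite (subst_full c e y) -(U_first uU) mulr_sumr mulr_sumr; apply: eq_bigr => K sK.
rewrite term_first //; apply: subset_trans sK (subsetIr _ _).
Qed.

Lemma compose e x : (forall k, x (c k).1 (c k).2 \is a GRing.unit) ->
  forall i j, subst_map (- e) c (subst_map e c x) i j = x i j.
Proof.
move=> Hu.
have yc : forall k, subst_map e c x (c k).1 (c k).2 = x (c k).1 (c k).2.
  by move=> k; rewrite subst_corner.
have yu : forall k, subst_map e c x (c k).1 (c k).2 \is a GRing.unit.
  by move=> k; rewrite yc.
have key : forall i j, (forall u, u \in Uset c i j ->
    subst_map (- e) c (subst_map e c x) (c u).1 j = x (c u).1 j) ->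
    subst_map (- e) c (subst_map e c x) i j = x i j.
  move=> i j IHu.
  rewrite rec_last // [subst_map e c x i j]rec_first // -addrA -big_split /=.
  rewrite big1 ?addr0 // => u uU.
  rewrite IHu // yc; ring.
suff H : forall N i j, (#|Uset c i j| <= N)%N ->
    subst_map (- e) c (subst_map e c x) i j = x i j.
  by move=> i j; apply: (H _ i j (leqnn _)).
elim => [|N IH] i j hN; apply: key => u uU.
- move: hN; rewrite leqn0 => /eqP /cards0_eq U0.
  by move: uU; rewrite U0 inE.
- apply: IH; rewrite -ltnS; apply: leq_trans hN.
  rewrite -(U_last uU); apply: proper_card.
  rewrite properE subsetIl /=; apply/negP => /subsetP /(_ u uU).
  by rewrite !inE /ltb ltnn andbF.
Qed.

End Rec.

Lemma col_convex m n (Y : {set 'I_m * 'I_n}) : is_ladder Y ->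
  forall (p p' r : 'I_m) (q : 'I_n), (p, q) \in Y -> (p', q) \in Y ->
  (p <= r)%N -> (r <= p')%N -> (r, q) \in Y.
Proof.
case=> cl [rows _] p p' r q pq p'q pr rp'.
have [s rs] := rows r.
case: (leqP q s) => qs.
- by case: (cl p r q s pq rs pr qs).
- by case: (cl r p' s q rs p'q rp' (ltnW qs)).
Qed.

Lemma corner_in m n h (Y : {set 'I_m * 'I_n}) (c : 'I_h.+1 -> 'I_m * 'I_n) :
  corners_listing Y c -> forall l, lower_outside_corner Y (c l).
Proof. by case=> _ Hc l; rewrite Hc; apply/imsetP; exists l. Qed.

Lemma G2_of m n h (Y : {set 'I_m * 'I_n}) (c : 'I_h.+1 -> 'I_m * 'I_n) :
  is_ladder Y -> corners_listing Y c ->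
  forall k l : 'I_h.+1, (k < l)%N -> ((c l).2 < (c k).2)%N.
Proof.
move=> lad cs k l kl.
have G1 : ((c k).1 < (c l).1)%N := cs.1 k l kl.
have /and3P [lY nrow _] := corner_in cs l.
have /and3P [kY _ _] := corner_in cs k.
rewrite ltnNge; apply/negP => le.
have kY' : ((c k).1, (c k).2) \in Y by rewrite -surjective_pairing.
have lY' : ((c l).1, (c l).2) \in Y by rewrite -surjective_pairing.
have [kl' _] := lad.1 _ _ _ _ kY' lY' (ltnW G1) le.
have rlt : ((c l).1 - 1 < m)%N.
  by apply: leq_ltn_trans (leq_subr 1 _) (ltn_ord _).
pose r := Ordinal rlt.
have rY : (r, (c l).2) \in Y.
  apply: (col_convex lad kl' lY') => /=; lia.
move/negP: nrow; apply; apply/existsP; exists r; rewrite rY andbT /=.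
apply/eqP; lia.
Qed.

Unset Implicit Arguments. Set Strict Implicit.

Theorem lemmaA13 (k : fieldType) (A : comUnitAlgType k) (m n t h : nat)
  (Y : {set 'I_m * 'I_n}) (c : 'I_h.+1 -> 'I_m * 'I_n)
  (x : 'I_m -> 'I_n -> A) :
  (2 < t)%N -> is_ladder Y -> t_connected t Y -> corners_listing Y c ->
  (forall w : 'I_h.+1, x (c w).1 (c w).2 \is a GRing.unit) ->
  (forall w : 'I_h.+1, psi_map c x (c w).1 (c w).2 = x (c w).1 (c w).2 /\
                       chi_map c x (c w).1 (c w).2 = x (c w).1 (c w).2) /\
  (forall (i : 'I_m) (j : 'I_n), (i, j) \in Y ->
     chi_map c (psi_map c x) i j = x i j /\
     psi_map c (chi_map c x) i j = x i j).
Proof.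
move=> _ lad _ cs Hu.
have G1 := cs.1.
have G2 := G2_of lad cs.
split.
  by move=> w; rewrite /psi_map /chi_map !subst_corner.
move=> i j _; rewrite /psi_map /chi_map; split.
- exact: (compose G1 G2 1 Hu i j).
- by have := compose G1 G2 (-1) Hu i j; rewrite opprK.
Qed.
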